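(* For any constant $\beta\in\mathbb R$, the system $\dot I=\varepsilon(\beta\sin\theta+1)$, $\dot\theta=I$, $(I,\theta)\in\mathbb R\times\mathbb T$, has no non-constant real-analytic first integral depending analytically on $\varepsilon$ near $\varepsilon=0$.
   Context: $\mathbb T=\mathbb R/2\pi\mathbb Z$; $\varepsilon$ is a small real parameter. *)

(* Defs.v *)
From Stdlib Require Import Reals.
From Coquelicot Require Import Coquelicot.
Open Scope R_scope.

Definition diag3 (t : nat -> nat -> nat -> R) (n : nat) : R :=
  sum_n (fun i => sum_n (fun j => t i j (n - i - j)%nat) (n - i)%nat) n.

Definition analytic3_at (F : R -> R -> R -> R) (x0 y0 z0 : R) : Prop :=
  exists r : R, 0 < r /\
  exists a : nat -> nat -> nat -> R,
    forall x y z : R,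
      Rabs (x - x0) < r -> Rabs (y - y0) < r -> Rabs (z - z0) < r ->
      ex_series (diag3 (fun i j k =>
        Rabs (a i j k) * Rabs (x - x0) ^ i * Rabs (y - y0) ^ j
          * Rabs (z - z0) ^ k)) /\
      F x y z = Series (diag3 (fun i j k =>
        a i j k * (x - x0) ^ i * (y - y0) ^ j * (z - z0) ^ k)).

(* F (I, theta, eps) is a real-analytic first integral, depending analytically
   on eps in (-eps0, eps0), of  I' = eps (beta sin theta + 1), theta' = I  on
   R x T (theta in R, F 2pi-periodic in theta). *)
Definition analytic_first_integral (beta eps0 : R) (F : R -> R -> R -> R) : Prop :=
  0 < eps0 /\
  (forall I th e, -eps0 < e < eps0 -> analytic3_at F I th e) /\
  (forall I th e, -eps0 < e < eps0 -> F I (th + 2 * PI) e = F I th e) /\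
  (forall I th e, -eps0 < e < eps0 ->
     e * (beta * sin th + 1) * Derive (fun J => F J th e) I
       + I * Derive (fun t => F I t e) th = 0).

Definition nonconstant_in_phase (eps0 : R) (F : R -> R -> R -> R) : Prop :=
  exists e I1 th1 I2 th2, -eps0 < e < eps0 /\ F I1 th1 e <> F I2 th2 e.

(* Main.v *)
Require Import Defs.
From Stdlib Require Import Reals.
From Coquelicot Require Import Coquelicot.
From Stdlib Require Import Lra Lia Psatz Classical.
Open Scope R_scope.

Lemma sumSR (f : nat -> R) n : sum_n f (S n) = sum_n f n + f (S n).
Proof. rewrite sum_Sn. reflexivity. Qed.
Lemma sum0R (f : nat -> R) : sum_n f 0 = f 0%nat.
Proof. apply sum_O. Qed.

Lemma sum_n_zero (f : nat -> R) n : (forall i, (i <= n)%nat -> f i = 0) -> sum_n f n = 0.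
Proof.
  induction n; intros H.
  - rewrite sum0R; apply H; lia.
  - rewrite sumSR, IHn. rewrite H; lia || lra. intros; apply H; lia.
Qed.

Lemma sum_n_single (f : nat -> R) n m : (m <= n)%nat ->
  (forall i, (i <= n)%nat -> i <> m -> f i = 0) -> sum_n f n = f m.
Proof.
  induction n; intros Hm H.
  - rewrite sum0R. replace m with 0%nat by lia. reflexivity.
  - rewrite sumSR. destruct (Nat.eq_dec m (S n)).
    + subst. rewrite sum_n_zero. lra. intros; apply H; lia.
    + rewrite IHn; try lia. rewrite (H (S n)); try lia. lra.
      intros; apply H; lia.
Qed.

Lemma sum_n_le' (f g : nat -> R) n : (forall i, (i <= n)%nat -> f i <= g i) -> sum_n f n <= sum_n g n.
Proof.
  induction n; intros H.
  - rewrite !sum0R; apply H; lia.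
  - rewrite !sumSR. apply Rplus_le_compat. apply IHn; intros; apply H; lia. apply H; lia.
Qed.

Lemma sum_n_abs (f : nat -> R) n : Rabs (sum_n f n) <= sum_n (fun i => Rabs (f i)) n.
Proof.
  induction n.
  - rewrite !sum0R; lra.
  - rewrite !sumSR. eapply Rle_trans. apply Rabs_triang. lra.
Qed.

Lemma sum_n_nonneg (f : nat -> R) n : (forall i, (i <= n)%nat -> 0 <= f i) -> 0 <= sum_n f n.
Proof.
  intros H. rewrite <- (sum_n_zero (fun _ => 0) n) by auto. apply sum_n_le'. auto.
Qed.

Lemma sum_n_ge_term (f : nat -> R) n m : (m <= n)%nat -> (forall i, (i <= n)%nat -> 0 <= f i) -> f m <= sum_n f n.
Proof.
  induction n; intros Hm H.
  - rewrite sum0R. replace m with 0%nat by lia. lra.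
  - rewrite sumSR. destruct (Nat.eq_dec m (S n)).
    + subst. assert (0 <= sum_n f n) by (apply sum_n_nonneg; intros; apply H; lia). lra.
    + assert (f m <= sum_n f n) by (apply IHn; intros; try apply H; lia).
      assert (0 <= f (S n)) by (apply H; lia). lra.
Qed.

Lemma sum_n_scal (c : R) (f : nat -> R) n : sum_n (fun i => c * f i) n = c * sum_n f n.
Proof.
  induction n. rewrite !sum0R; lra. rewrite !sumSR, IHn; lra.
Qed.

Lemma sum_n_plusR (f g : nat -> R) n : sum_n (fun i => f i + g i) n = sum_n f n + sum_n g n.
Proof.
  induction n. rewrite !sum0R; lra. rewrite !sumSR, IHn; lra.
Qed.

Lemma sum_shift (f : nat -> R) n : sum_n f (S n) = f 0%nat + sum_n (fun i => f (S i)) n.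
Proof.
  induction n.
  - rewrite sumSR, !sum0R. reflexivity.
  - rewrite sumSR, IHn, (sumSR (fun i => f (S i))). lra.
Qed.

Lemma sum_n_rev (g : nat -> nat -> R) n :
  sum_n (fun i => g i (n - i)%nat) n = sum_n (fun i => g (n - i)%nat i) n.
Proof.
  revert g. induction n; intros g.
  - rewrite !sum0R. reflexivity.
  - rewrite sumSR, sum_shift. simpl (S n - 0)%nat. simpl (S n - S n)%nat.
    rewrite Nat.sub_diag.
    rewrite (sum_n_ext_loc (fun i => g i (S n - i)%nat) (fun i => g i (S (n - i)))).
    2:{ intros; f_equal; lia. }
    rewrite (IHn (fun i j => g i (S j))).
    rewrite Rplus_comm; reflexivity.
Qed.

Lemma sum_n_minusR (f g : nat -> R) n : sum_n (fun i => f i - g i) n = sum_n f n - sum_n g n.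
Proof. induction n. rewrite !sum0R; lra. rewrite !sumSR, IHn; lra. Qed.

Lemma sum_n_oppR (f : nat -> R) n : sum_n (fun i => - f i) n = - sum_n f n.
Proof. induction n. rewrite !sum0R; lra. rewrite !sumSR, IHn; lra. Qed.

Lemma ser_cmp (t u : nat -> R) : (forall n, Rabs (t n) <= u n) -> ex_series u ->
  ex_series t /\ Rabs (Series t) <= Series u.
Proof.
  intros H Hu.
  assert (Ha : ex_series (fun n => Rabs (t n))).
  { apply (@ex_series_le R_AbsRing R_CompleteNormedModule _ u); auto. intros n. change (Rabs (Rabs (t n)) <= u n).
    rewrite Rabs_Rabsolu; auto. }
  split.
  - apply ex_series_Rabs; auto.
  - eapply Rle_trans. apply Series_Rabs; auto.
    apply Series_le; auto. intros n; split; [apply Rabs_pos| auto].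
Qed.

Lemma is_series_shiftK (w : nat -> R) l K : is_series w l ->
  is_series (fun n => if (K <=? n)%nat then w (n - K)%nat else 0) l.
Proof.
  intros H. induction K.
  - eapply is_series_ext; [|exact H]. intros n; simpl. f_equal; lia.
  - apply is_series_decr_1. simpl.
    match goal with |- is_series _ ?L => replace L with l end.
    2:{ change (l = Rplus l (Ropp 0)); rewrite Ropp_0, Rplus_0_r; reflexivity. }
    eapply is_series_ext; [|exact IHK]. intros n. simpl. reflexivity.
Qed.

Definition diag2 (t : nat -> nat -> R) (n : nat) : R := sum_n (fun i => t i (n - i)%nat) n.

Lemma diag2_single (w : nat -> R) K n :
  diag2 (fun i k => if (k =? K)%nat then w i else 0) n = if (K <=? n)%nat then w (n - K)%nat else 0.
Proof.
  unfold diag2. destruct (Nat.leb_spec K n).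
  - rewrite (sum_n_single _ n (n - K)); [|lia|].
    + replace (n - (n - K))%nat with K by lia. rewrite Nat.eqb_refl. reflexivity.
    + intros i Hi Hne. destruct (Nat.eqb_spec (n - i) K); [lia|reflexivity].
  - apply sum_n_zero. intros i Hi. destruct (Nat.eqb_spec (n - i) K); [lia|reflexivity].
Qed.

Lemma diag2_plus (t1 t2 : nat -> nat -> R) n :
  diag2 (fun i k => t1 i k + t2 i k) n = diag2 t1 n + diag2 t2 n.
Proof. unfold diag2. apply sum_n_plusR. Qed.

Lemma diag2_ext (t1 t2 : nat -> nat -> R) n : (forall i k, t1 i k = t2 i k) -> diag2 t1 n = diag2 t2 n.
Proof. intros H; unfold diag2; apply sum_n_ext; intros; apply H. Qed.

Lemma diag2_abs (t : nat -> nat -> R) n : Rabs (diag2 t n) <= diag2 (fun i k => Rabs (t i k)) n.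
Proof. apply sum_n_abs. Qed.

Lemma diag2_le (t u : nat -> nat -> R) n : (forall i k, t i k <= u i k) -> diag2 t n <= diag2 u n.
Proof. intros H; apply sum_n_le'; intros; apply H. Qed.

Lemma diag2_swap (t : nat -> nat -> R) n : diag2 (fun k i => t i k) n = diag2 t n.
Proof. unfold diag2. symmetry. apply (sum_n_rev t). Qed.

Lemma L2 (w : nat -> nat -> R) K : (forall k, ex_series (fun i => w i k)) ->
  is_series (diag2 (fun i k => if (k <=? K)%nat then w i k else 0))
            (sum_n (fun k => Series (fun i => w i k)) K).
Proof.
  intros Hw. induction K.
  - rewrite sum0R. eapply is_series_ext.
    2:{ apply (is_series_shiftK (fun i => w i 0%nat) _ 0). apply Series_correct, Hw. }
    intros n. cbv beta. etransitivity; [symmetry; apply (diag2_single (fun i => w i 0%nat) 0 n)|]. apply diag2_ext. intros i k.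
    destruct k; reflexivity.
  - rewrite sumSR.
    assert (X := is_series_plus _ _ _ _ IHK (is_series_shiftK (fun i => w i (S K)) _ (S K) (Series_correct _ (Hw (S K))))).
    eapply is_series_ext; [|exact X].
    intros n. cbv beta. etransitivity; [apply f_equal2; [reflexivity|symmetry; apply (diag2_single (fun i => w i (S K)) (S K) n)]|].
    etransitivity; [symmetry; apply diag2_plus|]. apply diag2_ext. intros i k.
    destruct (Nat.leb_spec k K); destruct (Nat.leb_spec k (S K)); destruct (Nat.eqb_spec k (S K)); try lia; try subst k; cbn; lra.
Qed.

Lemma pow_le1 (q : R) n : 0 <= q <= 1 -> q ^ n <= 1.
Proof. intros H; induction n; simpl. lra. assert (0 <= q ^ n) by (apply pow_le; lra). nra. Qed.

Lemma pow_anti (q : R) m k : 0 <= q <= 1 -> (m <= k)%nat -> q ^ k <= q ^ m.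
Proof.
  intros H Hmk. replace k with (m + (k - m))%nat by lia. rewrite pow_add.
  assert (0 <= q ^ m) by (apply pow_le; lra). assert (q ^ (k-m) <= 1) by (apply pow_le1; auto).
  assert (0 <= q ^ (k-m)) by (apply pow_le; lra). nra.
Qed.

Lemma is_series_of_lim (a : nat -> R) (l : R) : is_lim_seq (sum_n a) (Finite l) -> is_series a l.
Proof. intros H. exact H. Qed.

Lemma FUB (c : nat -> nat -> R) rho Z : Rabs Z < rho ->
  ex_series (diag2 (fun i k => Rabs (c i k) * rho ^ k)) ->
  (forall k, ex_series (fun i => c i k)) /\
  is_series (fun k => Series (fun i => c i k) * Z ^ k) (Series (diag2 (fun i k => c i k * Z ^ k))).
Proof.
  intros HZ Hu.
  set (u := fun i k => Rabs (c i k) * rho ^ k).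
  assert (Hrho : 0 < rho) by (pose proof (Rabs_pos Z); lra).
  assert (Hu0 : forall i k, 0 <= u i k).
  { intros; unfold u; apply Rmult_le_pos; [apply Rabs_pos|apply pow_le; lra]. }
  assert (H1 : forall k, ex_series (fun i => c i k)).
  { intros k. apply (ser_cmp _ (fun i => / rho ^ k * diag2 u (k + i))).
    - intros i. assert (Hp : 0 < rho ^ k) by (apply pow_lt; lra).
      assert (u i k <= diag2 u (k + i)).
      { unfold diag2. replace k with (k + i - i)%nat at 1 by lia.
        apply (sum_n_ge_term (fun i' => u i' (k + i - i')%nat)); [lia|]. intros; apply Hu0. }
      apply (Rmult_le_reg_l (rho ^ k)); auto. rewrite <- Rmult_assoc, Rinv_r by lra. replace (rho ^ k * Rabs (c i k)) with (u i k) by (unfold u; ring). lra.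
    - apply (@ex_series_scal_l R_AbsRing R_NormedModule).
      apply (ex_series_incr_n (diag2 u) k). exact Hu. }
  split; [exact H1|].
  set (q := Rabs Z / rho).
  assert (Hq : 0 <= q < 1).
  { unfold q; split. apply Rdiv_le_0_compat; [apply Rabs_pos|lra].
    apply (Rmult_lt_reg_r rho); auto. unfold Rdiv; rewrite Rmult_assoc, Rinv_l; lra. }
  set (M := Series (diag2 u)).
  assert (HZk : forall k, Rabs (Z ^ k) = q ^ k * rho ^ k).
  { intros k. rewrite <- RPow_abs, <- Rpow_mult_distr. unfold q. f_equal. field. lra. }
  assert (HS : ex_series (diag2 (fun i k => c i k * Z ^ k))).
  { apply (ser_cmp _ (diag2 u)); auto. intros n. eapply Rle_trans. apply diag2_abs.
    apply diag2_le. intros i k. unfold u. rewrite Rabs_mult, HZk.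
    assert (q ^ k <= 1) by (apply pow_le1; lra). assert (0 <= rho ^ k) by (apply pow_le; lra).
    pose proof (Rabs_pos (c i k)). assert (0 <= Rabs (c i k) * rho ^ k) by (apply Rmult_le_pos; lra). nra. }
  set (Ssum := Series (diag2 (fun i k => c i k * Z ^ k))).
  assert (Hpart : forall K, sum_n (fun k => Series (fun i => c i k) * Z ^ k) K =
     Series (diag2 (fun i k => if (K <? k)%nat then 0 else c i k * Z ^ k)) ).
  { intros K. rewrite (sum_n_ext _ (fun k => Series (fun i => c i k * Z ^ k))).
    2:{ intros k. symmetry. apply Series_scal_r. }
    symmetry. apply is_series_unique.
    eapply is_series_ext; [|apply (L2 (fun i k => c i k * Z ^ k) K)].
    - intros n. apply diag2_ext. intros i k. destruct (Nat.leb_spec k K); destruct (Nat.ltb_spec K k); try lia; reflexivity.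
    - intros k. apply (ex_series_ext (fun i => scal (Z ^ k) (c i k))).
      intros; unfold scal; simpl; unfold mult; simpl; ring.
      apply (@ex_series_scal_l R_AbsRing R_NormedModule). apply H1. }
  assert (Hbound : forall K, Rabs (sum_n (fun k => Series (fun i => c i k) * Z ^ k) K - Ssum) <= q ^ (S K) * M).
  { intros K. rewrite Hpart.
    assert (HT2 : ex_series (diag2 (fun i k => if (K <? k)%nat then 0 else c i k * Z ^ k))).
    { apply (ser_cmp _ (diag2 u)); auto. intros n. eapply Rle_trans. apply diag2_abs.
      apply diag2_le. intros i k. unfold u. destruct (K <? k)%nat. rewrite Rabs_R0; apply Hu0.
      rewrite Rabs_mult, HZk.
      assert (q ^ k <= 1) by (apply pow_le1; lra). assert (0 <= rho ^ k) by (apply pow_le; lra).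
      pose proof (Rabs_pos (c i k)). assert (0 <= Rabs (c i k) * rho ^ k) by (apply Rmult_le_pos; lra). nra. }
    assert (E : Series (diag2 (fun i k => if (K <? k)%nat then 0 else c i k * Z ^ k)) - Ssum =
              - Series (diag2 (fun i k => if (K <? k)%nat then c i k * Z ^ k else 0))).
    { unfold Ssum. rewrite <- Series_minus by auto. rewrite <- Series_opp. apply Series_ext.
      intros n. unfold diag2. rewrite <- sum_n_minusR, <- sum_n_oppR. apply sum_n_ext. intros i. destruct (K <? n - i)%nat; cbn; lra. }
    rewrite E, Rabs_Ropp.
    assert (HB := ser_cmp (diag2 (fun i k => if (K <? k)%nat then c i k * Z ^ k else 0))
                          (fun n => q ^ (S K) * diag2 u n)).
    rewrite Series_scal_l in HB. apply HB.
    - intros n. eapply Rle_trans. apply diag2_abs. cbv beta.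
      replace (q ^ S K * diag2 u n) with (diag2 (fun i k => q ^ S K * u i k) n) by (unfold diag2; apply sum_n_scal).
      apply diag2_le. intros i k. unfold u. destruct (Nat.ltb_spec K k).
      + rewrite Rabs_mult, HZk. pose proof (pow_anti q (S K) k ltac:(lra) H).
        assert (0 <= rho ^ k) by (apply pow_le; lra).
        pose proof (Rabs_pos (c i k)). assert (0 <= Rabs (c i k) * rho ^ k) by (apply Rmult_le_pos; lra).
        assert (0 <= q ^ k) by (apply pow_le; lra). nra.
      + rewrite Rabs_R0. apply Rmult_le_pos. apply pow_le; lra. apply Hu0.
    - apply (ex_series_ext (fun n => scal (q ^ S K) (diag2 u n))). reflexivity.
      apply (@ex_series_scal_l R_AbsRing R_NormedModule). exact Hu. }
  apply is_series_of_lim.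
  apply (is_lim_seq_ext (fun K => (sum_n (fun k => Series (fun i => c i k) * Z ^ k) K - Ssum) + Ssum)).
  { intros; ring. }
  assert (X : is_lim_seq (fun K => sum_n (fun k => Series (fun i => c i k) * Z ^ k) K - Ssum) 0).
  2:{ pose proof (is_lim_seq_plus' _ _ _ _ X (is_lim_seq_const Ssum)) as Y. rewrite Rplus_0_l in Y. exact Y. }
  apply (is_lim_seq_le_le (fun K => - (q ^ (S K) * M)) _ (fun K => q ^ (S K) * M)).
  - intros K. specialize (Hbound K). apply Rabs_le_between in Hbound. lra. 
  - assert (G : is_lim_seq (fun K => q ^ (S K)) 0).
    { apply -> (is_lim_seq_incr_1 (fun n => q ^ n)). apply is_lim_seq_geom. rewrite Rabs_pos_eq; lra. }
    pose proof (is_lim_seq_scal_r _ M _ G) as G2. simpl in G2. rewrite Rmult_0_l in G2.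
    apply -> (is_lim_seq_opp (fun K => q ^ S K * M) (Finite 0)) in G2. simpl in G2. rewrite Ropp_0 in G2. exact G2.
  - assert (G : is_lim_seq (fun K => q ^ (S K)) 0).
    { apply -> (is_lim_seq_incr_1 (fun n => q ^ n)). apply is_lim_seq_geom. rewrite Rabs_pos_eq; lra. }
    pose proof (is_lim_seq_scal_r _ M _ G) as G2. simpl in G2. rewrite Rmult_0_l in G2. exact G2.
Qed.

Lemma RadB (a : nat -> R) r : (forall y, Rabs y < r -> ex_series (fun k => a k * y ^ k)) ->
  forall y, Rabs y < r -> Rbar_lt (Rabs y) (CV_radius a).
Proof.
  intros H y Hy. set (y' := (Rabs y + r) / 2).
  assert (Hy' : Rabs y' < r /\ Rabs y < Rabs y').
  { pose proof (Rabs_pos y). unfold y'. rewrite Rabs_pos_eq; lra. }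
  assert (Hl := ex_series_lim_0 _ (H y' (proj1 Hy'))).
  assert (Rbar_le (Rabs y') (CV_radius a)).
  { apply Rbar_not_lt_le. intros Hc. apply (CV_disk_outside a y' Hc). exact Hl. }
  eapply Rbar_lt_le_trans; [|exact H0]. simpl. lra.
Qed.

Lemma shift_derive (h : R -> R) (x0 l : R) : is_derive h 0 l -> is_derive (fun x => h (x - x0)) x0 l.
Proof.
  intros H.
  assert (Hg : is_derive (fun x : R => x - x0) x0 1).
  { apply (is_derive_ext (fun x => x + (-x0))). intros t; reflexivity.
    replace 1 with (1 + 0) by ring. apply (@is_derive_plus R_AbsRing R_NormedModule).
    apply (@is_derive_id R_AbsRing). apply (@is_derive_const R_AbsRing R_NormedModule). }
  assert (H' : is_derive h (x0 - x0) l) by (replace (x0 - x0) with 0 by ring; exact H).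
  assert (X := is_derive_comp h (fun x => x - x0) x0 l 1 H' Hg). unfold scal in X; simpl in X. unfold mult in X; simpl in X.
  replace (1 * l) with l in X by ring. exact X.
Qed.

Lemma locally_ball_R (x0 r : R) (P : R -> Prop) : 0 < r -> (forall x, Rabs (x - x0) < r -> P x) -> locally x0 P.
Proof.
  intros Hr H. exists (mkposreal r Hr). intros y Hy. apply H. exact Hy.
Qed.

Lemma PS_deriv0 (b : nat -> R) r : 0 < r ->
  (forall y, Rabs y < r -> ex_series (fun k => b k * y ^ k)) ->
  is_derive (PSeries b) 0 (b 1%nat).
Proof.
  intros Hr H. assert (HR : Rbar_lt (Rabs 0) (CV_radius b)) by (apply (RadB b r H); rewrite Rabs_R0; lra).
  assert (X := is_derive_PSeries b 0 HR). rewrite PSeries_0 in X. unfold PS_derive in X.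
  simpl INR in X. replace (1 * b 1%nat) with (b 1%nat) in X by ring. exact X.
Qed.

Lemma PS_dern0 (b : nat -> R) r k : 0 < r ->
  (forall y, Rabs y < r -> ex_series (fun k => b k * y ^ k)) ->
  Derive_n (PSeries b) k 0 = INR (Factorial.fact k) * b k.
Proof.
  intros Hr H. assert (HR : Rbar_lt (Rabs 0) (CV_radius b)) by (apply (RadB b r H); rewrite Rabs_R0; lra).
  rewrite Rabs_R0 in HR. rewrite Derive_n_coef; auto. ring.
Qed.

Section Loc2.
Variable G : R -> R -> R.
Variable b : nat -> nat -> R.
Variable r : R.
Hypothesis Hr : 0 < r.
Hypothesis HG : forall X Z, Rabs X < r -> Rabs Z < r ->
  ex_series (diag2 (fun i k => Rabs (b i k) * Rabs X ^ i * Rabs Z ^ k)) /\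
  G X Z = Series (diag2 (fun i k => b i k * X ^ i * Z ^ k)).

Lemma mid_pt (z : R) : Rabs z < r -> exists rho, Rabs z < rho /\ rho < r /\ Rabs rho = rho.
Proof.
  intros H. exists ((Rabs z + r) / 2). pose proof (Rabs_pos z). rewrite (Rabs_pos_eq ((Rabs z + r) / 2)); [repeat split; lra | lra].
Qed.

Lemma LocA X : Rabs X < r ->
  (forall k, ex_series (fun i => b i k * X ^ i)) /\
  (forall Z, Rabs Z < r -> is_series (fun k => PSeries (fun i => b i k) X * Z ^ k) (G X Z)).
Proof.
  intros HX.
  assert (Main : forall Z, Rabs Z < r -> (forall k, ex_series (fun i => b i k * X ^ i)) /\
            is_series (fun k => PSeries (fun i => b i k) X * Z ^ k) (G X Z)).
  { intros Z HZ. destruct (mid_pt Z HZ) as (rho & H1 & H2 & H3).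
    assert (F := FUB (fun i k => b i k * X ^ i) rho Z H1).
    destruct F as [F1 F2].
    - destruct (HG X rho HX ltac:(lra)) as [E _]. eapply ex_series_ext; [|exact E].
      intros n. apply diag2_ext. intros i k. rewrite H3, Rabs_mult, <- RPow_abs. reflexivity.
    - split; auto. destruct (HG X Z HX HZ) as [_ E]. rewrite E.
      replace (Series (diag2 (fun i k => b i k * X ^ i * Z ^ k))) with
              (Series (diag2 (fun i k => b i k * X ^ i * Z ^ k))) by reflexivity.
      exact F2. }
  split.
  - apply (Main 0). rewrite Rabs_R0; lra.
  - intros Z HZ. apply Main; auto.
Qed.

Lemma LocB Z : Rabs Z < r ->
  (forall i, ex_series (fun k => b i k * Z ^ k)) /\
  (forall X, Rabs X < r -> is_series (fun i => PSeries (fun k => b i k) Z * X ^ i) (G X Z)).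
Proof.
  intros HZ.
  assert (Main : forall X, Rabs X < r -> (forall i, ex_series (fun k => b i k * Z ^ k)) /\
            is_series (fun i => PSeries (fun k => b i k) Z * X ^ i) (G X Z)).
  { intros X HX. destruct (mid_pt X HX) as (rho & H1 & H2 & H3).
    assert (F := FUB (fun k i => b i k * Z ^ k) rho X H1).
    destruct F as [F1 F2].
    - destruct (HG rho Z ltac:(lra) HZ) as [E _]. eapply ex_series_ext; [|exact E].
      intros n. rewrite <- diag2_swap. apply diag2_ext. intros k i. rewrite H3, Rabs_mult, <- RPow_abs. ring.
    - split; auto. destruct (HG X Z HX HZ) as [_ E]. rewrite E.
      replace (Series (diag2 (fun i k => b i k * X ^ i * Z ^ k))) with
              (Series (diag2 (fun k i => b i k * Z ^ k * X ^ i))).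
      exact F2. apply Series_ext. intros n. rewrite <- diag2_swap. apply diag2_ext. intros; ring. }
  split.
  - apply (Main 0). rewrite Rabs_R0; lra.
  - intros X HX. apply Main; auto.
Qed.

Lemma LocD1 Z : Rabs Z < r -> is_derive (fun X => G X Z) 0 (PSeries (fun k => b 1%nat k) Z).
Proof.
  intros HZ. destruct (LocB Z HZ) as [B1 B2].
  apply (is_derive_ext_loc (PSeries (fun i => PSeries (fun k => b i k) Z))).
  - apply (locally_ball_R 0 r); auto. intros X HX. rewrite Rminus_0_r in HX.
    unfold PSeries at 1. apply is_series_unique. apply B2; auto.
  - apply (PS_deriv0 (fun i => PSeries (fun k => b i k) Z) r); auto. intros y Hy. eexists. apply B2; auto.
Qed.

Lemma LocD2 X k : Rabs X < r -> Derive_n (fun Z => G X Z) k 0 = INR (Factorial.fact k) * PSeries (fun i => b i k) X.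
Proof.
  intros HX. destruct (LocA X HX) as [A1 A2].
  rewrite (Derive_n_ext_loc _ (PSeries (fun k => PSeries (fun i => b i k) X))).
  - apply (PS_dern0 (fun k => PSeries (fun i => b i k) X) r); auto. intros y Hy. eexists. apply A2; auto.
  - apply (locally_ball_R 0 r); auto. intros Z HZ. rewrite Rminus_0_r in HZ.
    symmetry. unfold PSeries at 1. apply is_series_unique. apply A2; auto.
Qed.

Lemma LocD3 k : is_derive (fun X => Derive_n (fun Z => G X Z) k 0) 0 (INR (Factorial.fact k) * b 1%nat k).
Proof.
  apply (is_derive_ext_loc (fun X => INR (Factorial.fact k) * PSeries (fun i => b i k) X)).
  - apply (locally_ball_R 0 r); auto. intros X HX. rewrite Rminus_0_r in HX.
    symmetry. apply LocD2; auto.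
  - apply is_derive_scal. apply (PS_deriv0 (fun i => b i k) r); auto. intros y Hy. apply (LocA y Hy).
Qed.

End Loc2.

Lemma diag3_j0 (t : nat -> nat -> nat -> R) n : (forall i j k, (0 < j)%nat -> t i j k = 0) ->
  diag3 t n = diag2 (fun i k => t i 0%nat k) n.
Proof.
  intros H. unfold diag3, diag2. apply sum_n_ext. intros i.
  rewrite (sum_n_single _ _ 0); [|lia|]. f_equal. lia.
  intros j _ Hj. apply H. lia.
Qed.

Lemma diag3_i0 (t : nat -> nat -> nat -> R) n : (forall i j k, (0 < i)%nat -> t i j k = 0) ->
  diag3 t n = diag2 (fun j k => t 0%nat j k) n.
Proof.
  intros H. unfold diag3, diag2. rewrite (sum_n_single _ _ 0); [|lia|].
  - rewrite Nat.sub_0_r. apply sum_n_ext. intros j. reflexivity.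
  - intros i _ Hi. apply sum_n_zero. intros j _. apply H. lia.
Qed.

Lemma diag3_ij0 (t : nat -> nat -> nat -> R) n : (forall i j k, (0 < i)%nat \/ (0 < j)%nat -> t i j k = 0) ->
  diag3 t n = t 0%nat 0%nat n.
Proof.
  intros H. rewrite diag3_i0; [|intros; apply H; auto]. unfold diag2.
  rewrite (sum_n_single _ _ 0); [|lia|]. f_equal; lia.
  intros j _ Hj. apply H. right; lia.
Qed.

Lemma pow0S (j : nat) : (0 < j)%nat -> 0 ^ j = 0.
Proof. intros; apply pow_i; auto. Qed.

Definition LocHyp (G : R -> R -> R) (b : nat -> nat -> R) (r : R) : Prop :=
  forall X Z, Rabs X < r -> Rabs Z < r ->
  ex_series (diag2 (fun i k => Rabs (b i k) * Rabs X ^ i * Rabs Z ^ k)) /\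
  G X Z = Series (diag2 (fun i k => b i k * X ^ i * Z ^ k)).

Lemma base_data (F : R -> R -> R -> R) x0 y0 : analytic3_at F x0 y0 0 ->
  exists r a, 0 < r /\
    LocHyp (fun X Z => F (x0 + X) y0 Z) (fun i k => a i 0%nat k) r /\
    LocHyp (fun Y Z => F x0 (y0 + Y) Z) (fun j k => a 0%nat j k) r /\
    (forall Z, Rabs Z < r -> ex_series (fun k => Rabs (a 0%nat 0%nat k) * Rabs Z ^ k) /\
        F x0 y0 Z = PSeries (fun k => a 0%nat 0%nat k) Z).
Proof.
  intros (r & Hr & a & HA). exists r, a. split; [auto|]. split; [|split].
  - intros X Z HX HZ. destruct (HA (x0 + X) y0 Z) as [E1 E2].
    + replace (x0 + X - x0) with X by ring; auto.
    + rewrite Rminus_diag, Rabs_R0; auto.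
    + rewrite Rminus_0_r; auto.
    + split.
      * eapply ex_series_ext; [|exact E1]. intros n. rewrite diag3_j0.
        apply diag2_ext. intros i k. replace (x0 + X - x0) with X by ring. rewrite Rminus_0_r. simpl; ring.
        intros i j k Hj. rewrite Rminus_diag, Rabs_R0, pow0S; auto; ring.
      * rewrite E2. apply Series_ext. intros n. rewrite diag3_j0.
        apply diag2_ext. intros i k. replace (x0 + X - x0) with X by ring. rewrite Rminus_0_r. simpl; ring.
        intros i j k Hj. rewrite Rminus_diag, pow0S; auto; ring.
  - intros X Z HX HZ. destruct (HA x0 (y0 + X) Z) as [E1 E2].
    + rewrite Rminus_diag, Rabs_R0; auto.
    + replace (y0 + X - y0) with X by ring; auto.
    + rewrite Rminus_0_r; auto.
    + split.
      * eapply ex_series_ext; [|exact E1]. intros n. rewrite diag3_i0.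
        apply diag2_ext. intros i k. replace (y0 + X - y0) with X by ring. rewrite Rminus_0_r. simpl; ring.
        intros i j k Hj. rewrite Rminus_diag, Rabs_R0, pow0S; auto; ring.
      * rewrite E2. apply Series_ext. intros n. rewrite diag3_i0.
        apply diag2_ext. intros i k. replace (y0 + X - y0) with X by ring. rewrite Rminus_0_r. simpl; ring.
        intros i j k Hj. rewrite Rminus_diag, pow0S; auto; ring.
  - intros Z HZ. destruct (HA x0 y0 Z) as [E1 E2].
    + rewrite Rminus_diag, Rabs_R0; auto.
    + rewrite Rminus_diag, Rabs_R0; auto.
    + rewrite Rminus_0_r; auto.
    + split.
      * eapply ex_series_ext; [|exact E1]. intros n. rewrite diag3_ij0.
        rewrite Rminus_0_r. simpl; ring.
        intros i j k [Hj|Hj]; rewrite !Rminus_diag, !Rabs_R0; [rewrite (pow0S i) | rewrite (pow0S j)]; auto; ring.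
      * rewrite E2. unfold PSeries. apply Series_ext. intros n. rewrite diag3_ij0.
        rewrite Rminus_0_r. simpl; ring.
        intros i j k [Hj|Hj]; rewrite !Rminus_diag; [rewrite (pow0S i) | rewrite (pow0S j)]; auto; ring.
Qed.

Lemma exps_of (p : nat -> R) y : ex_series (fun k => p k * y ^ k) -> ex_pseries p y.
Proof.
  intros H. unfold ex_pseries. eapply ex_series_ext; [|exact H]. intros k.
  rewrite pow_n_pow. unfold scal; simpl. unfold mult; simpl. ring.
Qed.

Lemma exps_to (p : nat -> R) y : ex_pseries p y -> ex_series (fun k => p k * y ^ k).
Proof.
  intros H. unfold ex_pseries in H. eapply ex_series_ext; [|exact H]. intros k.
  rewrite pow_n_pow. change (y ^ k * p k = p k * y ^ k). ring.
Qed.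

Lemma CoefL (p q : nat -> R) (c1 c2 r r' : R) : 0 < r -> 0 < r' ->
  (forall y, Rabs y < r -> ex_series (fun k => p k * y ^ k)) ->
  (forall y, Rabs y < r -> ex_series (fun k => q k * y ^ k)) ->
  (forall z, Rabs z < r' -> z * c1 * PSeries p z + c2 * PSeries q z = 0) ->
  c2 * q 0%nat = 0 /\ forall k, c1 * p k + c2 * q (S k) = 0.
Proof.
  intros Hr Hr' Hp Hq H.
  set (s := PS_plus (PS_scal c1 (PS_incr_1 p)) (PS_scal c2 q)).
  assert (Hs : forall y, Rabs y < r -> ex_pseries s y).
  { intros y Hy. apply ex_pseries_plus; apply ex_pseries_scal.
    - unfold mult; simpl; ring.
    - apply ex_pseries_incr_1, exps_of, Hp; auto.
    - unfold mult; simpl; ring.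
    - apply exps_of, Hq; auto. }
  assert (HsE : forall y, Rabs y < r -> PSeries s y = c1 * (y * PSeries p y) + c2 * PSeries q y).
  { intros y Hy. unfold s. rewrite PSeries_plus.
    - rewrite !PSeries_scal, PSeries_incr_1. reflexivity.
    - apply ex_pseries_scal. unfold mult; simpl; ring. apply ex_pseries_incr_1, exps_of, Hp; auto.
    - apply ex_pseries_scal. unfold mult; simpl; ring. apply exps_of, Hq; auto. }
  assert (Hz : forall n, s n = 0).
  { intros n. apply (PSeries_ext_recip s (fun _ => 0) n).
    - replace 0 with (Rabs 0) by apply Rabs_R0. apply (RadB s r); [|rewrite Rabs_R0; lra].
      intros y Hy. apply exps_to, Hs; auto.
    - rewrite CV_radius_const_0. simpl; auto.
    - apply (locally_ball_R 0 (Rmin r r')). apply Rmin_pos; auto.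
      intros x Hx. rewrite Rminus_0_r in Hx.
      assert (Rabs x < r) by (eapply Rlt_le_trans; [exact Hx| apply Rmin_l]).
      assert (Rabs x < r') by (eapply Rlt_le_trans; [exact Hx| apply Rmin_r]).
      rewrite PSeries_const_0, HsE by auto. rewrite <- (H x) by auto. ring. }
  split.
  - pose proof (Hz 0%nat) as E. unfold s, PS_plus, PS_scal, PS_incr_1 in E. simpl in E.
    unfold plus, scal in E; simpl in E. unfold mult in E; simpl in E.
    change (c1 * 0 + c2 * q 0%nat = 0) in E. lra.
  - intros k. pose proof (Hz (S k)) as E. unfold s, PS_plus, PS_scal, PS_incr_1 in E. simpl in E.
    unfold plus, scal in E; simpl in E. unfold mult in E; simpl in E. exact E.
Qed.

Definition gk (F : R -> R -> R -> R) (k : nat) (I th : R) : R := Derive_n (fun e => F I th e) k 0.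

Section Glob.
Variables (beta eps0 : R) (F : R -> R -> R -> R).
Hypothesis Heps : 0 < eps0.
Hypothesis Han : forall I th e, -eps0 < e < eps0 -> analytic3_at F I th e.
Hypothesis Hpde : forall I th e, -eps0 < e < eps0 ->
     e * (beta * sin th + 1) * Derive (fun J => F J th e) I
       + I * Derive (fun t => F I t e) th = 0.

Lemma gfacts I th : exists p q : nat -> R,
  (forall k, is_derive (fun x => gk F k x th) I (INR (Factorial.fact k) * p k)) /\
  (forall k, is_derive (fun y => gk F k I y) th (INR (Factorial.fact k) * q k)) /\
  I * q 0%nat = 0 /\ (forall k, (beta * sin th + 1) * p k + I * q (S k) = 0).
Proof.
  destruct (base_data F I th (Han I th 0 ltac:(lra))) as (r & a & Hr & Hx & Hy & H0).
  exists (fun k => a 1%nat 0%nat k), (fun k => a 0%nat 1%nat k).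
  split; [|split; [|]].
  - intros k. pose proof (LocD3 _ _ r Hr Hx k) as D. apply (shift_derive _ I) in D.
    eapply is_derive_ext; [|exact D]. intros t. cbv beta. unfold gk.
    rewrite Rplus_minus. reflexivity.
  - intros k. pose proof (LocD3 _ _ r Hr Hy k) as D. apply (shift_derive _ th) in D.
    eapply is_derive_ext; [|exact D]. intros t. cbv beta. unfold gk.
    rewrite Rplus_minus. reflexivity.
  - assert (HP : forall z, Rabs z < r -> Derive (fun J => F J th z) I = PSeries (fun k => a 1%nat 0%nat k) z).
    { intros z Hz. apply is_derive_unique. pose proof (LocD1 _ _ r Hr Hx z Hz) as D.
      apply (shift_derive _ I) in D. eapply is_derive_ext; [|exact D]. intros t. cbv beta.
      rewrite Rplus_minus. reflexivity. }
    assert (HQ : forall z, Rabs z < r -> Derive (fun t => F I t z) th = PSeries (fun k => a 0%nat 1%nat k) z).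
    { intros z Hz. apply is_derive_unique. pose proof (LocD1 _ _ r Hr Hy z Hz) as D.
      apply (shift_derive _ th) in D. eapply is_derive_ext; [|exact D]. intros t. cbv beta.
      rewrite Rplus_minus. reflexivity. }
    apply (CoefL _ _ (beta * sin th + 1) I r (Rmin r eps0)); auto.
    + apply Rmin_pos; auto.
    + intros y Hy'. apply (LocB _ _ r Hr Hx y Hy').
    + intros y Hy'. apply (LocB _ _ r Hr Hy y Hy').
    + intros z Hz.
      assert (Rabs z < r) by (eapply Rlt_le_trans; [exact Hz| apply Rmin_l]).
      assert (Rabs z < eps0) by (eapply Rlt_le_trans; [exact Hz| apply Rmin_r]).
      rewrite <- HP, <- HQ by auto. apply Hpde. apply Rabs_def2 in H1. lra.
Qed.

End Glob.

Lemma const_zero_deriv (h : R -> R) : (forall x, is_derive h x 0) -> forall a b, h a = h b.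
Proof.
  intros H a b. destruct (Rtotal_order a b) as [Hab|[Hab|Hab]].
  - apply (eq_is_derive h a b); auto.
  - subst; reflexivity.
  - symmetry. apply (eq_is_derive h b a); auto.
Qed.

Lemma cont_agree (f g : R -> R) x0 : continuous f x0 -> continuous g x0 ->
  (forall x, x <> x0 -> f x = g x) -> f x0 = g x0.
Proof.
  intros Hf Hg H. apply continuity_pt_filterlim in Hf. apply continuity_pt_filterlim in Hg.
  destruct (Req_dec (f x0) (g x0)) as [E|E]; auto. exfalso.
  set (eps := Rabs (f x0 - g x0) / 2).
  assert (He : 0 < eps). { unfold eps. assert (f x0 - g x0 <> 0) by lra. pose proof (Rabs_pos_lt _ H0). lra. }
  destruct (Hf eps He) as (a1 & Ha1 & F1). destruct (Hg eps He) as (a2 & Ha2 & F2).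
  set (y := x0 + Rmin a1 a2 / 2).
  assert (Hm : 0 < Rmin a1 a2) by (apply Rmin_pos; auto).
  assert (Hy : y <> x0) by (unfold y; lra).
  assert (Hd1 : R_dist y x0 < a1).
  { unfold R_dist, y. replace (x0 + Rmin a1 a2 / 2 - x0) with (Rmin a1 a2 / 2) by ring.
    rewrite Rabs_pos_eq by lra. pose proof (Rmin_l a1 a2). lra. }
  assert (Hd2 : R_dist y x0 < a2).
  { unfold R_dist, y. replace (x0 + Rmin a1 a2 / 2 - x0) with (Rmin a1 a2 / 2) by ring.
    rewrite Rabs_pos_eq by lra. pose proof (Rmin_r a1 a2). lra. }
  assert (D1 := F1 y (conj (conj I (not_eq_sym Hy)) Hd1)).
  assert (D2 := F2 y (conj (conj I (not_eq_sym Hy)) Hd2)).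
  simpl in D1, D2. unfold R_dist in D1, D2. rewrite (H y Hy) in D1.
  assert (Rabs (f x0 - g x0) <= Rabs (g y - f x0) + Rabs (g y - g x0)).
  { replace (f x0 - g x0) with ((g y - g x0) - (g y - f x0)) by ring.
    eapply Rle_trans. apply Rabs_triang. rewrite Rabs_Ropp. lra. }
  unfold eps in D1, D2. lra.
Qed.

Section Ind.
Variables (beta eps0 : R) (F : R -> R -> R -> R).
Hypothesis Heps : 0 < eps0.
Hypothesis Han : forall I th e, -eps0 < e < eps0 -> analytic3_at F I th e.
Hypothesis Hper : forall I th e, -eps0 < e < eps0 -> F I (th + 2 * PI) e = F I th e.
Hypothesis Hpde : forall I th e, -eps0 < e < eps0 ->
     e * (beta * sin th + 1) * Derive (fun J => F J th e) I
       + I * Derive (fun t => F I t e) th = 0.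

Definition dI k I th := Derive (fun x => gk F k x th) I.
Definition dT k I th := Derive (fun y => gk F k I y) th.

Lemma gper k I th : gk F k I (th + 2 * PI) = gk F k I th.
Proof.
  unfold gk. apply Derive_n_ext_loc. apply (locally_ball_R 0 eps0); auto.
  intros x Hx. rewrite Rminus_0_r in Hx. apply Rabs_def2 in Hx. apply Hper. lra.
Qed.

Lemma GD k I th : is_derive (fun x => gk F k x th) I (dI k I th) /\ is_derive (fun y => gk F k I y) th (dT k I th).
Proof.
  destruct (gfacts beta eps0 F Heps Han Hpde I th) as (p & q & H1 & H2 & _ & _).
  unfold dI, dT. split.
  - replace (Derive (fun x => gk F k x th) I) with (INR (Factorial.fact k) * p k). apply H1.
    symmetry; apply is_derive_unique; apply H1.
  - replace (Derive (fun y => gk F k I y) th) with (INR (Factorial.fact k) * q k). apply H2.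
    symmetry; apply is_derive_unique; apply H2.
Qed.

Lemma GR0 I th : I * dT 0 I th = 0.
Proof.
  destruct (gfacts beta eps0 F Heps Han Hpde I th) as (p & q & H1 & H2 & H3 & _).
  unfold dT. replace (Derive (fun y => gk F 0 I y) th) with (INR (Factorial.fact 0) * q 0%nat).
  simpl. lra. symmetry; apply is_derive_unique; apply H2.
Qed.

Lemma GR k I th : I * dT (S k) I th + INR (S k) * (beta * sin th + 1) * dI k I th = 0.
Proof.
  destruct (gfacts beta eps0 F Heps Han Hpde I th) as (p & q & H1 & H2 & _ & H4).
  unfold dT, dI. replace (Derive (fun y => gk F (S k) I y) th) with (INR (Factorial.fact (S k)) * q (S k)).
  2:{ symmetry; apply is_derive_unique; apply H2. }
  replace (Derive (fun x => gk F k x th) I) with (INR (Factorial.fact k) * p k).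
  2:{ symmetry; apply is_derive_unique; apply H1. }
  change (Factorial.fact (S k)) with (S k * Factorial.fact k)%nat. rewrite mult_INR. specialize (H4 k).
  replace (I * (INR (S k) * INR (Factorial.fact k) * q (S k)) + INR (S k) * (beta * sin th + 1) * (INR (Factorial.fact k) * p k))
    with (INR (S k) * INR (Factorial.fact k) * ((beta * sin th + 1) * p k + I * q (S k))) by ring.
  rewrite H4. ring.
Qed.

Lemma Step k : (forall I th, I * dT k I th = 0) ->
  (forall I th, gk F k I th = gk F k 0 0) /\ (forall I th, dI k I th = 0).
Proof.
  intros Hk.
  assert (Ha : forall I, I <> 0 -> forall th, gk F k I th = gk F k I 0).
  { intros I HI th. apply (const_zero_deriv (fun y => gk F k I y)). intros y.
    destruct (GD k I y) as [_ D]. assert (dT k I y = 0).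
    { specialize (Hk I y). apply Rmult_integral in Hk. destruct Hk; [contradiction|auto]. }
    rewrite H in D. exact D. }
  assert (Hc : forall I th, gk F k I th = gk F k I 0).
  { intros I th. destruct (Req_dec I 0) as [E|E]; [|apply Ha; auto].
    subst I. apply (cont_agree (fun x => gk F k x th) (fun x => gk F k x 0)).
    - apply (@ex_derive_continuous R_AbsRing R_NormedModule). eexists. apply (GD k 0 th).
    - apply (@ex_derive_continuous R_AbsRing R_NormedModule). eexists. apply (GD k 0 0).
    - intros x Hx. apply Ha; auto. }
  set (h := fun I => gk F k I 0).
  assert (Hd : forall I th, dI k I th = dI k I 0).
  { intros I th. unfold dI. apply Derive_ext. intros t. apply Hc. }
  assert (He : forall I, dI k I 0 = 0).
  { intros I. set (d := dI k I 0).
    set (phi := fun y => I * gk F (S k) I y + INR (S k) * d * (y - beta * cos y)).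
    assert (Hphi : forall y, is_derive phi y 0).
    { intros y. unfold phi.
      replace 0 with (I * dT (S k) I y + INR (S k) * d * (1 + beta * sin y)).
      2:{ rewrite <- (GR k I y). unfold d. rewrite (Hd I y). ring. }
      apply (@is_derive_plus R_AbsRing R_NormedModule).
      - apply is_derive_scal. apply (GD (S k) I y).
      - apply is_derive_scal. auto_derive; auto. ring. }
    assert (E := const_zero_deriv phi Hphi (0 + 2 * PI) 0).
    unfold phi in E. rewrite (gper (S k) I 0) in E.
    rewrite Rplus_0_l, cos_2PI, cos_0 in E.
    assert (Hk0 : 0 < INR (S k)) by (apply lt_0_INR; lia).
    assert (Hz : INR (S k) * d * (2 * PI) = 0) by lra.
    pose proof PI_RGT_0 as Hpi.
    apply Rmult_integral in Hz. destruct Hz as [Hz|Hz]; [|lra].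
    apply Rmult_integral in Hz. destruct Hz; lra. }
  assert (Hh : forall I, h I = h 0).
  { intros I. apply (const_zero_deriv h). intros x. destruct (GD k x 0) as [D _].
    rewrite He in D. exact D. }
  split.
  - intros I th. rewrite Hc. apply Hh.
  - intros I th. rewrite Hd. apply He.
Qed.

Lemma AllConst : forall k I th, gk F k I th = gk F k 0 0.
Proof.
  assert (P : forall k, forall I th, I * dT k I th = 0).
  { induction k.
    - apply GR0.
    - intros I th. destruct (Step k IHk) as [_ H0]. pose proof (GR k I th) as G.
      rewrite H0 in G. lra. }
  intros k. apply (Step k (P k)).
Qed.

End Ind.

Definition Loc (f : R -> R) (e0 : R) : Prop :=
  exists rho, 0 < rho /\ exists A : nat -> R, forall y, Rabs y < rho ->
    ex_series (fun n => Rabs (A n) * Rabs y ^ n) /\ f (e0 + y) = PSeries A y.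

Lemma loc_rad (A : nat -> R) rho : (forall y, Rabs y < rho -> ex_series (fun n => Rabs (A n) * Rabs y ^ n)) ->
  forall y, Rabs y < rho -> ex_series (fun n => A n * y ^ n).
Proof.
  intros H y Hy. apply ex_series_Rabs. eapply ex_series_ext; [|apply (H y Hy)].
  intros n. rewrite Rabs_mult, RPow_abs. reflexivity.
Qed.

Lemma zero_left (h : R -> R) rho : 0 < rho -> continuity_pt h 0 -> (forall y, -rho < y < 0 -> h y = 0) -> h 0 = 0.
Proof.
  intros Hr Hc Hz. destruct (Req_dec (h 0) 0) as [E|E]; auto. exfalso.
  assert (He : 0 < Rabs (h 0)) by (apply Rabs_pos_lt; auto).
  destruct (Hc (Rabs (h 0)) He) as (a & Ha & F1).
  set (y := - Rmin a rho / 2).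
  assert (Hm : 0 < Rmin a rho) by (apply Rmin_pos; auto).
  pose proof (Rmin_l a rho). pose proof (Rmin_r a rho).
  assert (Hy : y <> 0) by (unfold y; lra).
  assert (Hd : R_dist y 0 < a).
  { unfold R_dist, y. rewrite Rminus_0_r, Rabs_left by lra. lra. }
  assert (D := F1 y (conj (conj I (not_eq_sym Hy)) Hd)). simpl in D. unfold R_dist in D.
  rewrite Hz in D by (unfold y; lra). rewrite Rminus_0_l, Rabs_Ropp in D. lra.
Qed.

Lemma OSU (A B : nat -> R) rho : 0 < rho ->
  (forall y, Rabs y < rho -> ex_series (fun n => A n * y ^ n)) ->
  (forall y, Rabs y < rho -> ex_series (fun n => B n * y ^ n)) ->
  (forall y, -rho < y < 0 -> PSeries A y = PSeries B y) -> forall n, A n = B n.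
Proof.
  intros Hr HA HB H n.
  set (c := fun n => A n - B n).
  assert (Hc : forall y, Rabs y < rho -> ex_series (fun n => c n * y ^ n)).
  { intros y Hy. apply (ex_series_ext (fun n => A n * y ^ n - B n * y ^ n)).
    intros k; unfold c; symmetry; apply Rmult_minus_distr_r. apply (@ex_series_minus R_AbsRing R_NormedModule); auto. }
  assert (HcE : forall y, Rabs y < rho -> PSeries c y = PSeries A y - PSeries B y).
  { intros y Hy. unfold PSeries. rewrite <- Series_minus by auto. apply Series_ext. intros; unfold c; ring. }
  assert (Rad : forall y, Rabs y < rho -> Rbar_lt (Rabs y) (CV_radius c)) by (apply RadB; auto).
  set (h := PSeries (PS_derive_n n c)).
  assert (Hh : h 0 = 0).
  { apply (zero_left h rho Hr).
    - unfold h. apply PSeries_continuity. rewrite CV_radius_derive_n. apply Rad. rewrite Rabs_R0; lra.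
    - intros y Hy. unfold h. rewrite <- Derive_n_PSeries.
      2:{ apply Rad. rewrite Rabs_left by lra. lra. }
      rewrite (Derive_n_ext_loc _ (fun _ => 0)).
      + destruct n. reflexivity. apply Derive_n_const.
      + apply (locally_ball_R y (Rmin (-y) (y + rho))). apply Rmin_pos; lra.
        intros x Hx. pose proof (Rmin_l (-y) (y+rho)). pose proof (Rmin_r (-y) (y+rho)).
        apply Rabs_def2 in Hx.
        rewrite HcE by (apply Rabs_def1; lra). rewrite H by lra. ring. }
  unfold h in Hh. rewrite PSeries_0 in Hh. unfold PS_derive_n in Hh. simpl in Hh.
  assert (INR (Factorial.fact n) <> 0) by apply INR_fact_neq_0.
  unfold c in Hh. replace (INR (Factorial.fact n) / 1) with (INR (Factorial.fact n)) in Hh by field.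
  apply Rmult_integral in Hh. destruct Hh; [contradiction|lra].
Qed.

Lemma IDpos (f g : R -> R) eps0 delta : 0 < delta ->
  (forall e0, -eps0 < e0 < eps0 -> Loc f e0 /\ Loc g e0) ->
  (forall e, Rabs e < delta -> f e = g e) ->
  forall e, 0 <= e < eps0 -> f e = g e.
Proof.
  intros Hd HL H0 es Hes. destruct (Req_dec (f es) (g es)) as [Eq|Ne]; auto. exfalso.
  set (E := fun t => 0 <= t /\ forall s, 0 <= s <= t -> f s = g s).
  assert (Hub : forall t, E t -> t < es).
  { intros t [Ht1 Ht2]. destruct (Rlt_le_dec t es); auto. exfalso. apply Ne, Ht2. lra. }
  assert (HE0 : E (delta / 2)).
  { split. lra. intros s Hs. apply H0. rewrite Rabs_pos_eq; lra. }
  destruct (completeness E) as [T [HT1 HT2]].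
  { exists es. intros t Ht. left. apply Hub; auto. }
  { exists (delta / 2). auto. }
  assert (HTe : T <= es) by (apply HT2; intros t Ht; left; apply Hub; auto).
  assert (HTp : delta / 2 <= T) by (apply HT1; auto).
  assert (Hleft : forall s, 0 <= s < T -> f s = g s).
  { intros s Hs. destruct (classic (exists t, E t /\ s < t)) as [[t [Ht Hst]]|Hn].
    - apply (proj2 Ht). lra.
    - exfalso. assert (T <= s). { apply HT2. intros t Ht. destruct (Rle_dec t s); auto. exfalso; apply Hn; exists t; split; auto; lra. } lra. }
  destruct (HL T ltac:(lra)) as [(r1 & Hr1 & A & HA) (r2 & Hr2 & B & HB)].
  set (rho := Rmin (Rmin r1 r2) T).
  assert (Hrho : 0 < rho) by (unfold rho; repeat apply Rmin_pos; lra).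
  assert (Hr1' : rho <= r1) by (unfold rho; eapply Rle_trans; [apply Rmin_l|apply Rmin_l]).
  assert (Hr2' : rho <= r2) by (unfold rho; eapply Rle_trans; [apply Rmin_l|apply Rmin_r]).
  assert (HrT : rho <= T) by (unfold rho; apply Rmin_r).
  assert (HAB : forall n, A n = B n).
  { apply (OSU A B rho Hrho).
    - intros y Hy. apply (loc_rad A r1); auto. intros; apply HA; auto. lra.
    - intros y Hy. apply (loc_rad B r2); auto. intros; apply HB; auto. lra.
    - intros y Hy. assert (Rabs y < rho) by (rewrite Rabs_left by lra; lra).
      rewrite <- (proj2 (HA y ltac:(lra))), <- (proj2 (HB y ltac:(lra))). apply Hleft. lra. }
  set (m := Rmin (Rmin r1 r2) (eps0 - T)).
  assert (Hm : 0 < m) by (unfold m; repeat apply Rmin_pos; lra).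
  assert (Hm1 : m <= r1) by (unfold m; eapply Rle_trans; [apply Rmin_l|apply Rmin_l]).
  assert (Hm2 : m <= r2) by (unfold m; eapply Rle_trans; [apply Rmin_l|apply Rmin_r]).
  assert (HEt : E (T + m / 2)).
  { split. lra. intros s Hs. destruct (Rlt_le_dec s T). apply Hleft; lra.
    replace s with (T + (s - T)) by ring.
    assert (Rabs (s - T) < m) by (rewrite Rabs_pos_eq; lra).
    rewrite (proj2 (HA (s - T) ltac:(lra))), (proj2 (HB (s - T) ltac:(lra))).
    unfold PSeries. apply Series_ext. intros; rewrite HAB; auto. }
  assert (T + m / 2 <= T) by (apply HT1; auto). lra.
Qed.

Lemma Loc_refl (f : R -> R) e0 : Loc f (- e0) -> Loc (fun e => f (- e)) e0.
Proof.
  intros (rho & Hr & A & HA). exists rho. split; auto. exists (fun n => (-1) ^ n * A n).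
  intros y Hy. assert (Hy' : Rabs (- y) < rho) by (rewrite Rabs_Ropp; auto).
  destruct (HA (- y) Hy') as [E1 E2]. split.
  - eapply ex_series_ext; [|exact E1]. intros n. rewrite Rabs_Ropp, Rabs_mult, pow_1_abs, Rmult_1_l. reflexivity.
  - replace (- (e0 + y)) with (- e0 + - y) by ring. rewrite E2. unfold PSeries. apply Series_ext.
    intros n. replace (- y) with ((-1) * y) by ring. rewrite Rpow_mult_distr. ring.
Qed.

Lemma IDfull (f g : R -> R) eps0 delta : 0 < delta ->
  (forall e0, -eps0 < e0 < eps0 -> Loc f e0 /\ Loc g e0) ->
  (forall e, Rabs e < delta -> f e = g e) ->
  forall e, -eps0 < e < eps0 -> f e = g e.
Proof.
  intros Hd HL H0 e He. destruct (Rle_dec 0 e).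
  - apply (IDpos f g eps0 delta); auto. lra.
  - replace e with (- - e) by ring.
    apply (IDpos (fun e => f (- e)) (fun e => g (- e)) eps0 delta); auto.
    + intros e0 He0. destruct (HL (- e0) ltac:(lra)). split; apply Loc_refl; auto.
    + intros x Hx. apply H0. rewrite Rabs_Ropp; auto.
    + lra.
Qed.

Lemma loc_of_an (F : R -> R -> R -> R) x0 y0 z0 : analytic3_at F x0 y0 z0 -> Loc (fun e => F x0 y0 e) z0.
Proof.
  intros (r & Hr & a & HA). exists r. split; auto. exists (fun k => a 0%nat 0%nat k).
  intros y Hy. destruct (HA x0 y0 (z0 + y)) as [E1 E2].
  - rewrite Rminus_diag, Rabs_R0; auto.
  - rewrite Rminus_diag, Rabs_R0; auto.
  - replace (z0 + y - z0) with y by ring; auto.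
  - split.
    + eapply ex_series_ext; [|exact E1]. intros n. rewrite diag3_ij0.
      replace (z0 + y - z0) with y by ring. simpl; ring.
      intros i j k [Hj|Hj]; rewrite !Rminus_diag, !Rabs_R0; [rewrite (pow0S i) | rewrite (pow0S j)]; auto; ring.
    + rewrite E2. unfold PSeries. apply Series_ext. intros n. rewrite diag3_ij0.
      replace (z0 + y - z0) with y by ring. simpl; ring.
      intros i j k [Hj|Hj]; rewrite !Rminus_diag; [rewrite (pow0S i) | rewrite (pow0S j)]; auto; ring.
Qed.

Theorem proposition6p1 (beta : R) :
  ~ (exists (eps0 : R) (F : R -> R -> R -> R),
       analytic_first_integral beta eps0 F /\ nonconstant_in_phase eps0 F).
Proof.
  intros (eps0 & F & (Heps & Han & Hper & Hpde) & (e & I1 & th1 & I2 & th2 & He & Hne)).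
  apply Hne.
  assert (HL : forall I th e0, -eps0 < e0 < eps0 -> Loc (fun e => F I th e) e0).
  { intros; apply loc_of_an, Han; auto. }
  destruct (HL I1 th1 0 ltac:(lra)) as (r1 & Hr1 & A & HA).
  destruct (HL I2 th2 0 ltac:(lra)) as (r2 & Hr2 & B & HB).
  assert (Dn : forall I th r (C : nat -> R), 0 < r ->
     (forall y, Rabs y < r -> ex_series (fun n => Rabs (C n) * Rabs y ^ n) /\ F I th (0 + y) = PSeries C y) ->
     forall k, gk F k I th = INR (Factorial.fact k) * C k).
  { intros I th r C Hr HC k. unfold gk.
    rewrite (Derive_n_ext_loc _ (PSeries C)).
    - apply (PS_dern0 C r); auto. apply loc_rad. intros; apply HC; auto.
    - apply (locally_ball_R 0 r); auto. intros x Hx. rewrite Rminus_0_r in Hx.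
      rewrite <- (proj2 (HC x Hx)). rewrite Rplus_0_l. reflexivity. }
  assert (HAB : forall k, A k = B k).
  { intros k. pose proof (Dn I1 th1 r1 A Hr1 HA k) as D1. pose proof (Dn I2 th2 r2 B Hr2 HB k) as D2.
    rewrite (AllConst beta eps0 F Heps Han Hper Hpde) in D1, D2.
    assert (INR (Factorial.fact k) <> 0) by apply INR_fact_neq_0.
    apply (Rmult_eq_reg_l (INR (Factorial.fact k))); auto. lra. }
  apply (IDfull (fun e => F I1 th1 e) (fun e => F I2 th2 e) eps0 (Rmin r1 r2)).
  - apply Rmin_pos; auto.
  - intros e0 He0. split; apply HL; auto.
  - intros x Hx. pose proof (Rmin_l r1 r2). pose proof (Rmin_r r1 r2).
    replace x with (0 + x) by ring.
    rewrite (proj2 (HA x ltac:(lra))), (proj2 (HB x ltac:(lra))).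
    unfold PSeries. apply Series_ext. intros; rewrite HAB; auto.
  - auto.
Qed.
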